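(* Let $X$ be any normed space. Then the rendezvous set $\mathcal{R}(X)$ is nonempty.
   Context: For a normed space $X$ let $S_X=\{x:\|x\|=1\}$ be its unit sphere and use the kernel $k(x,y)=\|x-y\|$. For $n\in\mathbb{N}$, $R_n(S_X):=\bigcap_{w_1,\dots,w_n\in S_X}\overline{\mathrm{conv}}\{\frac1n\sum_{j=1}^n \|x-w_j\|: x\in S_X\}$ (closed convex hull in $\mathbb{R}$, i.e. a closed interval), and $\mathcal{R}(X):=R(S_X):=\bigcap_{n=1}^\infty R_n(S_X)$. *)

(* Defs.v *)
From HB Require Import structures.
From mathcomp Require Import all_boot all_order all_algebra.
From mathcomp Require Import all_classical all_reals all_analysis.
Set Implicit Arguments. Unset Strict Implicit. Unset Printing Implicit Defensive.
Import Order.TTheory GRing.Theory Num.Theory.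
Import numFieldNormedType.Exports.
Local Open Scope classical_set_scope.
Local Open Scope ring_scope.

Section Rendezvous.
Variables (R : realType) (X : normedModType R).

Definition unit_sphere : set X := [set x | `|x| = 1].

Definition avg_dist (n : nat) (w : 'I_n -> X) (x : X) : R :=
  n%:R^-1 * \sum_(j < n) `|x - w j|.

Definition convex_setR (C : set R) : Prop :=
  forall a b t, C a -> C b -> 0 <= t -> t <= 1 -> C (t * a + (1 - t) * b).

Definition clconv (A : set R) : set R :=
  \bigcap_(C in [set C : set R | [/\ closed C, convex_setR C & A `<=` C]]) C.

Definition Rn_set (n : nat) : set R :=
  \bigcap_(w in [set w : 'I_n -> X | forall j, unit_sphere (w j)])
     clconv (avg_dist w @` unit_sphere).

Definition rendezvous_set : set R :=
  \bigcap_(n in [set n : nat | (0 < n)%N]) Rn_set n.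

End Rendezvous.

(* Main.v *)
Require Import Defs.
From HB Require Import structures.
From mathcomp Require Import all_boot all_order all_algebra.
From mathcomp Require Import all_classical all_reals all_analysis.
From mathcomp Require Import lra ring.
Import numFieldNormedType.Exports.
Import Order.TTheory GRing.Theory Num.Theory.
Local Open Scope classical_set_scope.
Local Open Scope ring_scope.

Section Aux.
Variables (R : realType) (X : normedModType R).

Lemma avg_le (m : nat) (F : 'I_m -> R) (c : R) : (0 < m)%N ->
  (forall k, c <= F k) -> c <= m%:R^-1 * \sum_(k < m) F k.
Proof.
move=> m0 H.
have m0' : (0 : R) < m%:R by rewrite ltr0n.
rewrite ler_pdivlMl //.
apply: (@le_trans _ _ (\sum_(k < m) c)); first by rewrite sumr_const card_ord mulr_natl.
by apply: ler_sum => k _; exact: H.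
Qed.

Lemma avg_ge (m : nat) (F : 'I_m -> R) (c : R) : (0 < m)%N ->
  (forall k, F k <= c) -> m%:R^-1 * \sum_(k < m) F k <= c.
Proof.
move=> m0 H.
have m0' : (0 : R) < m%:R by rewrite ltr0n.
rewrite ler_pdivrMl //.
apply: (@le_trans _ _ (\sum_(k < m) c)); last by rewrite sumr_const card_ord mulr_natl.
by apply: ler_sum => k _; exact: H.
Qed.

Lemma swap_avg (n m : nat) (w : 'I_n -> X) (v : 'I_m -> X) :
  m%:R^-1 * \sum_(k < m) avg_dist w (v k) =
  n%:R^-1 * \sum_(j < n) avg_dist v (w j).
Proof.
rewrite /avg_dist -!big_distrr /= mulrA [in RHS]mulrA [n%:R^-1 * _]mulrC.
congr (_ * _); rewrite exchange_big /=; apply: eq_bigr => j _.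
by apply: eq_bigr => k _; rewrite distrC.
Qed.

Lemma avg_dist_ge0 n (w : 'I_n -> X) x : 0 <= avg_dist w x.
Proof.
by rewrite /avg_dist mulr_ge0 // ?invr_ge0 ?ler0n // sumr_ge0.
Qed.

Lemma avg_dist_le2 n (w : 'I_n -> X) x : (0 < n)%N ->
  (forall j, @unit_sphere R X (w j)) -> @unit_sphere R X x -> avg_dist w x <= 2.
Proof.
move=> n0 Hw Hx; apply: avg_ge => // k.
rewrite (le_trans (ler_normB _ _)) // Hx Hw.
by [].
Qed.

Lemma between (A : set R) (t : R) : A !=set0 -> has_ubound A -> has_lbound A ->
  inf A <= t -> t <= sup A -> clconv A t.
Proof.
move=> A0 Aub Alb ht1 ht2 C [Ccl Ccv AC].
apply: Ccl => B /nbhs_ballP [e /= e0 sub].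
have [a' Aa' ha'] := inf_adherent e0 (conj A0 Alb).
have [b' Ab' hb'] := sup_adherent e0 (conj A0 Aub).
have la' : inf A <= a' by apply: ge_inf.
have lb' : b' <= sup A by apply: sup_upper_bound.
have [ta|hat] := ltP t a'.
  exists a'; split; first exact: AC.
  apply: sub; rewrite -ball_normE /= distrC ger0_norm; lra.
have [bt|tb] := ltP b' t.
  exists b'; split; first exact: AC.
  apply: sub; rewrite -ball_normE /= ger0_norm; lra.
exists t; split; last by apply: sub; exact: ballxx.
have [eab|nab] := eqVneq a' b'.
  have -> : t = a' by apply/eqP; rewrite eq_le hat /= eab tb.
  exact: AC.
have ab : a' < b' by rewrite lt_neqAle nab (le_trans hat tb).
have d0 : b' - a' != 0 by rewrite subr_eq0 (gt_eqF ab).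
have -> : t = ((b' - t) / (b' - a')) * a' + (1 - (b' - t) / (b' - a')) * b'.
  by field.
apply: Ccv; try exact: AC.
  by rewrite divr_ge0 // subr_ge0 // ltW.
by rewrite ler_pdivrMr ?subr_gt0 // mul1r lerD2l lerN2.
Qed.


Lemma img_ne n (w : 'I_n -> X) : (avg_dist w @` @unit_sphere R X) !=set0 <-> (@unit_sphere R X) !=set0.
Proof.
split; first by case=> y [x Sx _]; exists x.
by case=> x Sx; exists (avg_dist w x); exists x.
Qed.

Lemma img_lb n (w : 'I_n -> X) : has_lbound (avg_dist w @` @unit_sphere R X).
Proof. by exists 0 => y [x _ <-]; exact: avg_dist_ge0. Qed.

Lemma img_ub n (w : 'I_n -> X) : (0 < n)%N -> (forall j, @unit_sphere R X (w j)) ->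
  has_ubound (avg_dist w @` @unit_sphere R X).
Proof. by move=> n0 Hw; exists 2 => y [x Sx <-]; exact: avg_dist_le2. Qed.

Lemma key n m (w : 'I_n -> X) (v : 'I_m -> X) : (0 < n)%N -> (0 < m)%N ->
  (forall j, @unit_sphere R X (w j)) -> (forall k, @unit_sphere R X (v k)) ->
  inf (avg_dist w @` @unit_sphere R X) <= sup (avg_dist v @` @unit_sphere R X).
Proof.
move=> n0 m0 Hw Hv.
apply: (@le_trans _ _ (m%:R^-1 * \sum_(k < m) avg_dist w (v k))).
  apply: avg_le => // k; apply: ge_inf; first exact: img_lb.
  by exists (v k).
rewrite swap_avg; apply: avg_ge => // j.
apply: sup_upper_bound; last by exists (w j).
split; last exact: img_ub.
by apply/img_ne; exists (w j).
Qed.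

End Aux.

Theorem corollary2p3 (R : realType) (X : normedModType R) :
  rendezvous_set X !=set0.
Proof.
have [[e Se]|nS] := pselect (exists e : X, `|e| = 1); last first.
  exists 0 => n /= n0 w /= Hw; exfalso; apply: nS.
  by exists (w (Ordinal n0)); exact: Hw.
set B := [set y : R | exists n, (0 < n)%N /\ exists w : 'I_n -> X,
  (forall j, @unit_sphere R X (w j)) /\ y = inf (avg_dist w @` @unit_sphere R X)].
pose v0 := fun _ : 'I_1 => e.
have Hv0 : forall j, @unit_sphere R X (v0 j) by [].
have hB : has_sup B.
  split; first by exists (inf (avg_dist v0 @` @unit_sphere R X)); exists 1%N; split => //; exists v0.
  exists (sup (avg_dist v0 @` @unit_sphere R X)) => y [n [n0 [w [Hw ->]]]].
  exact: key.
exists (sup B) => m /= m0 v /= Hv.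
have Sne : (@unit_sphere R X) !=set0 by exists (v (Ordinal m0)); exact: Hv.
apply: between.
- exact/img_ne.
- exact: img_ub.
- exact: img_lb.
- by apply: sup_upper_bound => //; exists m; split => //; exists v.
- apply: ge_sup; first by case: hB.
  move=> y [n [n0 [w [Hw ->]]]]; exact: key.
Qed.
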